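(* Let $\Gamma$ be a flower graph and $\Gamma'$ a mandarin graph, both with $N$ edges $e_1,\dots,e_N$. Then $\mathcal{T}_{\mathrm{sym}}(\Gamma)=\mathcal{T}_{\mathrm{s}}(\Gamma')$. In particular, $P_{\Gamma,\mathrm{sym}}=c\,P_{M,\mathrm{s}}$ for some constant $c$.
   Context: A flower graph has one vertex and $N$ loops; a mandarin graph has two vertices and $N$ edges each joining them; edges are oriented and indexed $e_1,\dots,e_N$ in both, and $\deg(v)$ counts edge-ends. For a metric graph $(\Gamma,\boldsymbol{\ell})$ with $e_j\cong[0,\ell_j]$ and the Laplacian $-d^2/dt^2$ under standard vertex conditions (continuity, zero sum of outgoing derivatives), an eigenpair $(k^2,f)$ with $k>0$ has $f|_{e_j}(t)=A_j\cos(kt)+B_j\sin(kt)=C_j\cos(k(\ell_j-t))+D_j\sin(k(\ell_j-t))$, $\mathrm{tr}_k(f)$ the vector of all $(A_j,B_j,C_j,D_j)$ (for $k=0$, constant $c$: $A_j=C_j=c$, $B_j=D_j=0$). $\mathcal{T}(\Gamma)=\{(\exp(ik\boldsymbol{\ell}),\mathrm{tr}_k(f))\}\subset\mathbb{T}^N\times\mathbb{C}^{4N}$ over all $\boldsymbol{\ell}\in\mathbb{R}_+^N$, eigenvalues, and $f$ in eigenspaces (including $0$), with $\exp(ik\boldsymbol{\ell})=(e^{ik\ell_j})_j$; $\mathcal{T}_{\mathbf{z}}(\Gamma)$ the fiber over $\mathbf{z}$. $P_\Gamma(\mathbf{z})=\det(I_{2N}-\mathrm{diag}(z_1..z_N,z_1..z_N)S)$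 with $S$ the real matrix on $(a_1..a_N,b_1..b_N)$: $(S\mathbf{a})_j=\frac{2}{\deg(o(e_j))}(\sum_{o(e_i)=o(e_j)}b_i+\sum_{\tau(e_i)=o(e_j)}a_i)-b_j$, $(S\mathbf{a})_{N+j}=\frac{2}{\deg(\tau(e_j))}(\sum_{o(e_i)=\tau(e_j)}b_i+\sum_{\tau(e_i)=\tau(e_j)}a_i)-a_j$. For the flower, $P_\Gamma=P_{\Gamma,\mathrm{sym}}\prod_{j=1}^N(1-z_j)$ defines $P_{\Gamma,\mathrm{sym}}$, and $\mathcal{T}_{\mathrm{sym}}(\Gamma)=\{(\mathbf{z},\mathbf{x})\in\mathcal{T}(\Gamma):P_{\Gamma,\mathrm{sym}}(\mathbf{z})=0,\ (A_j,B_j)=(C_j,D_j)\ \forall j\}$. For the mandarin, $P_{M,\mathrm{s}}(\mathbf{z})=\sum_{j=1}^N(z_j-1)\prod_{i\ne j}(z_i+1)$ and $\mathcal{T}_{\mathrm{s}}(\Gamma')=\{(\mathbf{z},\mathbf{x})\in\mathcal{T}(\Gamma'):P_{M,\mathrm{s}}(\mathbf{z})=0,\ (A_j,B_j)=(C_j,D_j)\ \forall j\}$. *)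

(* Defs.v *)
From Stdlib Require Import Reals.
From mathcomp Require Import all_boot all_algebra.
From mathcomp Require Import Rstruct.
From mathcomp Require Import complex.
From mathcomp Require Import mpoly.

Set Implicit Arguments.
Unset Strict Implicit.
Unset Printing Implicit Defensive.

Import GRing.Theory.
Local Open Scope ring_scope.

Notation CC := (R[i]).

Definition rC (x : R) : CC := Complex x 0.
Definition cis (x : R) : CC := Complex (cos x) (sin x).

(* A graph with N oriented edges e_0..e_{N-1}: vertex type V, origin o,       *)
(* terminus t.                                                                *)
Section Graph.
Variables (N : nat) (V : finType) (o t : 'I_N -> V).

Definition deg (v : V) : nat := #|[set j | o j == v]| + #|[set j | t j == v]|.

(* the real matrix S acting on (a_1..a_N, b_1..b_N) *)
Definition Smat : 'M[CC]_(N + N) :=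
  \matrix_(r, s)
    match split r, split s with
    | inl j, inl i => (2%:R / (deg (o j))%:R) * (t i == o j)%:R
    | inl j, inr i => (2%:R / (deg (o j))%:R) * (o i == o j)%:R - (i == j)%:R
    | inr j, inl i => (2%:R / (deg (t j))%:R) * (t i == t j)%:R - (i == j)%:R
    | inr j, inr i => (2%:R / (deg (t j))%:R) * (o i == t j)%:R
    end.

Definition idx2 (r : 'I_(N + N)) : 'I_N :=
  match split r with inl j => j | inr j => j end.

Definition Ppoly : {mpoly CC[N]} :=
  \det (1%:M - diag_mx (\row_r 'X_(idx2 r)) *m map_mx (fun c => c%:MP) Smat).

Definition cA (x : 'I_N -> CC * CC * CC * CC) j := (x j).1.1.1.
Definition cB (x : 'I_N -> CC * CC * CC * CC) j := (x j).1.1.2.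
Definition cC (x : 'I_N -> CC * CC * CC * CC) j := (x j).1.2.
Definition cD (x : 'I_N -> CC * CC * CC * CC) j := (x j).2.

(* For k > 0: x = tr_k(f) of an f with f|e_j(t) = A_j cos(kt) + B_j sin(kt)
   = C_j cos(k(l_j - t)) + D_j sin(k(l_j - t)) satisfying -f'' = k^2 f and the
   standard vertex conditions (continuity, zero sum of outgoing derivatives). *)
Definition eigcoeffs (k : R) (l : 'I_N -> R) (x : 'I_N -> CC * CC * CC * CC) :
    Prop :=
  (forall j, cC x j = cA x j * rC (cos (k * l j)) + cB x j * rC (sin (k * l j))
          /\ cD x j = cA x j * rC (sin (k * l j)) - cB x j * rC (cos (k * l j)))
  /\ (forall i j, (o i = o j -> cA x i = cA x j)
               /\ (t i = t j -> cC x i = cC x j)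
               /\ (o i = t j -> cA x i = cC x j))
  /\ (forall v : V, \sum_(j | o j == v) rC k * cB x j
                   + \sum_(j | t j == v) rC k * cD x j = 0).

(* k^2 (k > 0) is an eigenvalue: there is a nonzero eigenfunction *)
Definition is_eig (k : R) (l : 'I_N -> R) : Prop :=
  exists x, eigcoeffs k l x /\ exists j, (cA x j, cB x j) != (0, 0).

Definition inT (z : 'I_N -> CC) (x : 'I_N -> CC * CC * CC * CC) : Prop :=
  exists l : 'I_N -> R, (forall j, 0 < l j) /\
  exists k : R, 0 <= k /\ z = (fun j => cis (k * l j)) /\
    ((k = 0 /\ exists c : CC, x = (fun _ => (c, 0, c, 0)))
     \/ (0 < k /\ is_eig k l /\ eigcoeffs k l x)).

Definition symcoeffs (x : 'I_N -> CC * CC * CC * CC) : Prop :=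
  forall j, cA x j = cC x j /\ cB x j = cD x j.

End Graph.

Definition flower_o (N : nat) (j : 'I_N) : unit := tt.
Definition flower_t (N : nat) (j : 'I_N) : unit := tt.
Definition mand_o (N : nat) (j : 'I_N) : bool := false.
Definition mand_t (N : nat) (j : 'I_N) : bool := true.

Definition P_flower (N : nat) : {mpoly CC[N]} :=
  Ppoly (@flower_o N) (@flower_t N).

Definition P_Ms (N : nat) : {mpoly CC[N]} :=
  \sum_(j < N) ('X_j - 1) * \prod_(i < N | i != j) ('X_i + 1).

(* T_sym(flower): P_{Gamma,sym} is the polynomial Q with
   P_Gamma = Q * prod_j (1 - z_j) (unique since {mpoly} is a domain) *)
Definition in_Tsym_flower (N : nat) (z : 'I_N -> CC)
    (x : 'I_N -> CC * CC * CC * CC) : Prop :=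
  inT (@flower_o N) (@flower_t N) z x
  /\ (exists Q : {mpoly CC[N]},
        P_flower N = Q * \prod_(j < N) (1 - 'X_j) /\ Q.@[z] = 0)
  /\ symcoeffs x.

Definition in_Ts_mandarin (N : nat) (z : 'I_N -> CC)
    (x : 'I_N -> CC * CC * CC * CC) : Prop :=
  inT (@mand_o N) (@mand_t N) z x
  /\ (P_Ms N).@[z] = 0
  /\ symcoeffs x.

(* Main.v *)
Require Import Defs.
From Stdlib Require Import Reals.
From mathcomp Require Import all_boot all_algebra.
From mathcomp Require Import Rstruct complex mpoly.
Import GRing.Theory.
Local Open Scope ring_scope.
From mathcomp Require Import ring.
Import Num.Theory.
Import order.Order.TTheory.

Lemma splitl m n (i : 'I_m) : fintype.split (lshift n i) = inl i.
Proof. exact: (unsplitK (inl i)). Qed.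
Lemma splitr m n (i : 'I_n) : fintype.split (rshift m i) = inr i.
Proof. exact: (unsplitK (inr i)). Qed.

Section BL.
Variable R : comRingType.

Lemma rank_one (n : nat) (d c : 'I_n -> R) :
  \det (\matrix_(i, j) ((i == j)%:R * d i + c i)) =
  \prod_i d i + \sum_j c j * \prod_i (if i == j then 1 else d i).
Proof.
elim: n d c => [|n IH] d c.
  by rewrite det_mx00 !big_ord0 addr0.
set A := \matrix_(i, j) _.
have l0 : forall i : 'I_n, (lift 0 i == 0 :> 'I_n.+1) = false.
  by move=> i; rewrite eq_sym (negbTE (neq_lift _ _)).
have ll : forall a b : 'I_n.+1.-1, (lift (ord0:'I_n.+1) a == lift ord0 b) = (a == b).
  by move=> a b; apply: inj_eq; exact: lift_inj.
pose B : 'M[R]_n.+1 := \matrix_(i, j) (if i == 0 then (j == 0)%:R else A i j).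
pose C : 'M[R]_n.+1 := \matrix_(i, j) (if i == 0 then 1 else A i j).
have -> : \det A = d 0 * \det B + c 0 * \det C.
  apply: (determinant_multilinear (i0 := 0)).
  - by apply/rowP => j; rewrite !mxE eqxx /= mulr1 mulrC eq_sym.
  - by apply/matrixP => i j; rewrite !mxE.
  - by apply/matrixP => i j; rewrite !mxE.
have -> : \det B = \det (\matrix_(i, j) ((i == j)%:R * d (lift 0 i) + c (lift 0 i))).
  rewrite (expand_det_row _ 0) big_ord_recl big1 ?addr0.
    rewrite /cofactor !mxE eqxx mul1r /= expr0 mul1r; congr (\det _).
    by apply/matrixP => i j; rewrite !mxE l0 (inj_eq (@lift_inj _ 0)).
  by move=> j _; rewrite !mxE eqxx /= mul0r.
pose L : 'M[R]_n.+1 := \matrix_(i, j) ((i == j)%:R + ((j == 0) && (i != 0))%:R * c i).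
pose U : 'M[R]_n.+1 := \matrix_(i, j) (if i == 0 then 1 else (i == j)%:R * d i).
have -> : C = L *m U.
  apply/matrixP => i j; rewrite !mxE.
  under eq_bigr do rewrite !mxE mulrDl.
  rewrite big_split /= (bigD1 i) //= eqxx mul1r big1; last first.
    by move=> k /negbTE; rewrite eq_sym => ->; rewrite mul0r.
  rewrite addr0 (bigD1 0) //= big1; last first.
    by move=> k /negbTE ->; rewrite mul0r mul0r.
  rewrite addr0 /= mulr1.
  by case: eqP => [->|_] /=; rewrite ?mul0r ?addr0 ?mul1r.
rewrite det_mulmx det_trig; last first.
  apply/is_trig_mxP => i j lt; rewrite mxE.
  have /negbTE -> : i != j by rewrite -val_eqE /= neq_ltn lt.
  have /negbTE -> : j != 0 by apply/eqP => h; rewrite h in lt.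
  by rewrite mul0r addr0.
rewrite -det_tr det_trig; last first.
  apply/is_trig_mxP => i j lt; rewrite !mxE.
  have /negbTE -> : j != i by rewrite -val_eqE /= neq_ltn lt orbT.
  have /negbTE -> : j != 0 by apply/eqP => h; rewrite h in lt.
  by rewrite mul0r.
rewrite IH.
rewrite !big_ord_recl !mxE !eqxx /= mul0r addr0 !mul1r.
have E : \prod_(i < n) (L (lift 0 i) (lift 0 i)) = 1.
  by apply: big1 => i _; rewrite !mxE eqxx /= mul0r addr0.
have E2 : \prod_(i < n) ((U^T) (lift 0 i) (lift 0 i)) = \prod_(i < n) d (lift 0 i).
  by apply: eq_bigr => i _; rewrite !mxE /= eqxx mul1r.
rewrite E E2 mul1r.
under [X in _ = _ + (_ + X)]eq_bigr => i _.
  rewrite big_ord_recl eq_sym l0; under eq_bigr do rewrite ll. over.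
rewrite mulrDr -!addrA; congr (_ + _); rewrite addrC; congr (_ + _).
rewrite big_distrr; apply: eq_bigr => j _ /=; ring.
Qed.

Definition Sf n (u : R) : 'M[R]_(n + n) :=
  \matrix_(r, s) match fintype.split r, fintype.split s with
    | inl j, inl i => u
    | inl j, inr i => u - (i == j)%:R
    | inr j, inl i => u - (i == j)%:R
    | inr j, inr i => u end.

Lemma det_block n (u : R) (z : 'I_n -> R) :
  \det (1%:M - diag_mx (\row_r z (idx2 r)) *m Sf n u) =
  \prod_j (1 - z j) *
  \det (\matrix_(i, j) ((i == j)%:R * (1 + z i) + (- (u + u) * z i))).
Proof.
rewrite mul_diag_mx; set M := 1%:M - _.
pose P : 'M[R]_n := \matrix_(i, j) ((i == j)%:R - z i * u).
pose Q : 'M[R]_n := \matrix_(i, j) (- (z i * (u - (j == i)%:R))).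
have -> : M = block_mx P Q Q P.
  rewrite -[M]submxK; congr block_mx; apply/matrixP => i j;
  rewrite !mxE ?splitl ?splitr /idx2 ?splitl ?splitr
    ?eq_lshift ?eq_rshift ?eq_lrshift ?eq_rlshift /=; ring.
have Hm : block_mx 1%:M 0 (-1%:M) 1%:M *m block_mx P Q Q P *m block_mx 1%:M 0 1%:M 1%:M
   = block_mx (P + Q) Q 0 (P - Q).
  rewrite !mulmx_block !mulmx1 !mul1mx !mulmx0 !mul0mx !addr0 !add0r !mulNmx !mul1mx.
  congr block_mx.
  all: try (apply/matrixP => i j; rewrite !mxE; ring).
have := congr1 determinant Hm.
rewrite !det_mulmx det_lblock det_ublock det_lblock !det1 !mul1r mulr1 => ->.
rewrite mulrC; congr (_ * _).
  have -> : P - Q = diag_mx (\row_j (1 - z j)).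
    apply/matrixP => i j; rewrite !mxE; have [->|ne] := eqVneq i j.
      by rewrite /= mulr1n; ring.
    by rewrite /= mulr0n; ring.
  by rewrite det_diag; apply: eq_bigr => i _; rewrite mxE.
congr (\det _); apply/matrixP => i j; rewrite !mxE; rewrite [j == i]eq_sym; ring.
Qed.
End BL.

Lemma deg_flower N : deg (@flower_o N) (@flower_t N) tt = (N + N)%N.
Proof.
rewrite /deg; have E : [set j | @flower_o N j == tt] = setT by apply/setP => j; rewrite !inE.
have E2 : [set j | @flower_t N j == tt] = setT by apply/setP => j; rewrite !inE.
by rewrite E ?E2 !cardsT card_ord.
Qed.

Lemma Smat_flower N (hN : (0 < N)%N) :
  map_mx (fun c : CC => c%:MP) (Smat (@flower_o N) (@flower_t N))
  = @Sf _ N ((N%:R^-1 : CC)%:MP : {mpoly CC[N]}).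
Proof.
have hN0 : (N%:R : CC) != 0 by rewrite pnatr_eq0 -lt0n.
have E : (2%:R / (N + N)%:R : CC) = N%:R^-1.
  rewrite natrD; field; by rewrite hN0 /= -natrD pnatr_eq0 -lt0n addn_gt0 hN.
apply/matrixP => r s; rewrite !mxE.
case: (fintype.split r) => j; case: (fintype.split s) => i; rewrite deg_flower E /=.
all: by rewrite mulr1 ?rmorphB /= ?rmorph_nat.
Qed.

Lemma Pflower_eq N (hN : (0 < N)%N) :
  P_flower N = ((- N%:R^-1 : CC) *: P_Ms N) * \prod_(j < N) (1 - 'X_j).
Proof.
have hN0 : (N%:R : CC) != 0 by rewrite pnatr_eq0 -lt0n.
set u : {mpoly CC[N]} := (N%:R^-1 : CC)%:MP.
have hu : u * N%:R = 1 by rewrite /u -mpolyC_nat -rmorphM /= mulVf.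
rewrite /P_flower /Ppoly Smat_flower //.
rewrite (@det_block _ _ u (fun j : 'I_N => 'X_j)) rank_one.
rewrite -mul_mpolyC mulrC; congr (_ * _).
set W := \prod_(i < N) (1 + 'X_i : {mpoly CC[N]}).
set w := fun j : 'I_N => \prod_(i < N) (if i == j then 1 else (1 + 'X_i : {mpoly CC[N]})).
have hw : forall j, w j = \prod_(i < N | i != j) ('X_i + 1).
  move=> j; rewrite /w (bigD1 j) //= eqxx mul1r; apply: eq_bigr => i /negbTE ->.
  by rewrite addrC.
have hW : forall j, 'X_j * w j = W - w j.
  move=> j; rewrite /W (bigD1 j) //= hw.
  have e : \prod_(i < N | i != j) (1 + 'X_i : {mpoly CC[N]}) = \prod_(i < N | i != j) ('X_i + 1) by apply: eq_bigr => i _; rewrite addrC.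
  rewrite e; ring.
have -> : \sum_(j < N) - (u + u) * 'X_j * w j = - (u + u) * (W *+ N - \sum_j w j).
  have -> : W *+ N = \sum_(j < N) W by rewrite sumr_const card_ord.
  rewrite -sumrB big_distrr /=; apply: eq_bigr => j _.
  by rewrite -mulrA hW.
rewrite /P_Ms.
have -> : \sum_(j < N) ('X_j - 1) * \prod_(i < N | i != j) ('X_i + 1)
   = W *+ N - (\sum_j w j + \sum_j w j).
  have -> : W *+ N = \sum_(j < N) W by rewrite sumr_const card_ord.
  rewrite -big_split -sumrB /=; apply: eq_bigr => j _.
  by rewrite -hw mulrBl hW mul1r; ring.
rewrite -mulr_natr /u rmorphN /=; fold u.
apply/eqP; rewrite -subr_eq0; apply/eqP.
set S := \sum_j w j.
have -> : W + - (u + u) * (W * N%:R - S) - - u * (W * N%:R - (S + S)) = W * (1 - u * N%:R) by ring.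
by rewrite hu subrr mulr0.
Qed.

Lemma cisE (t : R) : cis t = rC (cos t) + 'i * rC (sin t).
Proof. apply/eqP; rewrite eq_complex /=. rewrite !mul0r !mulr0 !mul1r !subr0 !add0r !addr0. by rewrite !eqxx. Qed.

Lemma ii : ('i : CC) * 'i = -1.
Proof. by apply/eqP; rewrite eq_complex /= !(mul0r, mulr0, mul1r, mulr1, add0r, addr0, sub0r, subr0, oppr0) !eqxx. Qed.

Lemma rCM (a b : R) : rC (a * b) = rC a * rC b.
Proof. apply/eqP; rewrite eq_complex /= !mulr0 !mul0r subr0 addr0 !eqxx. done. Qed.
Lemma rCD (a b : R) : rC (a + b) = rC a + rC b.
Proof. apply/eqP; rewrite eq_complex /= addr0 !eqxx. done. Qed.
Lemma rC1 : rC 1 = 1. Proof. by []. Qed.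

Lemma cs1 (t : R) : rC (cos t) * rC (cos t) + rC (sin t) * rC (sin t) = 1.
Proof.
rewrite -!rCM -rCD -rC1; congr rC.
have := sin2_cos2 t; rewrite /Rsqr => h. by rewrite Rplus_comm.
Qed.

Lemma cis_m1 (t : R) : cis t = -1 -> rC (cos t) = -1 /\ rC (sin t) = 0.
Proof.
rewrite /cis /rC => /eqP; rewrite eq_complex /= => /andP [/eqP -> /eqP ->].
split; apply/eqP; rewrite eq_complex /= ?oppr0 !eqxx //.
Qed.

Lemma rC_eq0 (k : R) : rC k = 0 -> k = 0.
Proof. by rewrite /rC => /eqP; rewrite eq_complex /= => /andP [/eqP]. Qed.

Definition good N (k : R) (l : 'I_N -> R) (x : 'I_N -> CC * CC * CC * CC) : Prop :=
  symcoeffs x /\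
  (forall j, cC x j = cA x j * rC (cos (k * l j)) + cB x j * rC (sin (k * l j))
          /\ cD x j = cA x j * rC (sin (k * l j)) - cB x j * rC (cos (k * l j))) /\
  (forall i j, cA x i = cA x j) /\ \sum_j cB x j = 0.
Arguments good {N}.

Lemma rel_alg (T : comRingType) (I c s w : T) (hI : I * I = -1)
  (hcs : c * c + s * s = 1) :
  (1 + (c + I * s)) * w = (1 + (c + I * s)) * w * c + (- I * ((c + I * s) - 1) * w) * s /\
  - I * ((c + I * s) - 1) * w = (1 + (c + I * s)) * w * s - (- I * ((c + I * s) - 1) * w) * c.
Proof.
split; apply/eqP; rewrite -subr_eq0; apply/eqP.
  have -> : (1 + (c + I * s)) * w - ((1 + (c + I * s)) * w * c + (- I * ((c + I * s) - 1) * w) * s)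
    = w * ((I * I + 1) * s * s - (c * c + s * s - 1)) by ring.
  by rewrite hI hcs; ring.
have -> : - I * ((c + I * s) - 1) * w - ((1 + (c + I * s)) * w * s - (- I * ((c + I * s) - 1) * w) * c)
  = - w * ((I * I + 1) * (1 + c) * s + I * (c * c + s * s - 1)) by ring.
by rewrite hI hcs; ring.
Qed.

Lemma PMs_eval N (z : 'I_N -> CC) :
  (P_Ms N).@[z] = \sum_j (z j - 1) * \prod_(i | i != j) (z i + 1).
Proof.
rewrite /P_Ms rmorph_sum; apply: eq_bigr => j _.
rewrite rmorphM rmorph_prod /= mevalB mevalXU meval1; congr (_ * _).
by apply: eq_bigr => i _; rewrite mevalD mevalXU meval1.
Qed.

Lemma witness N (hN : (0 < N)%N) (k : R) (l : 'I_N -> R) :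
  (P_Ms N).@[fun j => cis (k * l j)] = 0 ->
  exists x, good k l x /\ exists j, (cA x j, cB x j) != (0, 0).
Proof.
rewrite PMs_eval; set z := fun j => cis (k * l j) => hP.
set w := fun j => \prod_(i | i != j) (z i + 1).
set A := \prod_i (1 + z i).
have hAw : forall j, A = (1 + z j) * w j.
  move=> j; rewrite /A (bigD1 j) //=; congr (_ * _); apply: eq_bigr => i _; exact: addrC.
have [hA|hA] := eqVneq A 0; last first.
  pose B := fun j => - 'i * (z j - 1) * w j.
  exists (fun j => (A, B j, A, B j)); split; last first.
    by exists (Ordinal hN); rewrite /cA /cB /= xpair_eqE negb_and hA.
  split; first by move=> j.
  split.
    move=> j; rewrite /cA /cB /cC /cD /= (hAw j) /B /z cisE.
    apply: (@rel_alg CC 'i _ _ (w j) ii (cs1 _)).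
  split; first by [].
  rewrite /cB /=; transitivity (- 'i * \sum_j (z j - 1) * w j); last by rewrite hP mulr0.
  rewrite big_distrr /=; apply: eq_bigr => j _; rewrite /B; ring.
have [j0 _ hj0] : exists2 j0, true & (1 + z j0 == 0) by apply/prodf_eq0; rewrite -/A hA.
have zj0 : z j0 = -1 by apply/eqP; rewrite -addr_eq0 addrC.
have : w j0 == 0.
  have E : \sum_(i < N | i != j0) (z i - 1) * \prod_(i0 < N | i0 != i) (z i0 + 1) = 0.
    apply: big1 => j nj; rewrite (bigD1 j0) 1?eq_sym //= zj0 addNr mul0r mulr0 //.
  move: hP; rewrite (bigD1 j0) //= E addr0.
  change ((z j0 - 1) * w j0 = 0 -> w j0 == 0).
  rewrite zj0 => /eqP; rewrite mulf_eq0 => /orP [|//].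
  by rewrite -opprD oppr_eq0 (_ : 1 + 1 = 2%:R) // pnatr_eq0.
move=> /prodf_eq0 [j1 nj1 hj1].
have zj1 : z j1 = -1 by apply/eqP; rewrite -addr_eq0.
  have nj1' : (j0 == j1) = false by rewrite eq_sym (negbTE nj1).
pose b := fun j : 'I_N => ((j == j0)%:R - (j == j1)%:R : CC).
exists (fun j => (0, b j, 0, b j)); split; last first.
  exists j0; rewrite /cA /cB /= xpair_eqE negb_and /b !eqxx nj1' subr0.
  by rewrite oner_eq0 orbT.
split; first by move=> j.
split.
  move=> j; rewrite /cA /cB /cC /cD /=.
  have [->|n0] := eqVneq j j0.
    have [-> ->] := cis_m1 _ zj0; rewrite /b !eqxx nj1' /=; split; ring.
  have [->|n1] := eqVneq j j1.
    have [-> ->] := cis_m1 _ zj1; rewrite /b !eqxx (negbTE nj1) /=; split; ring.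
  rewrite /b (negbTE n0) (negbTE n1) /=; split; ring.
split; first by [].
have ind : forall a : 'I_N, \sum_j ((j == a)%:R : CC) = 1.
  by move=> a; rewrite (bigD1 a) //= eqxx big1 ?addr0 // => j /negbTE ->.
by rewrite /cB /= /b sumrB !ind subrr.
Qed.

Lemma sum_fl N (v : unit) (F : 'I_N -> CC) : \sum_(j | @flower_o N j == v) F j = \sum_j F j.
Proof. by case: v; apply: eq_bigl => j. Qed.
Lemma sum_flt N (v : unit) (F : 'I_N -> CC) : \sum_(j | @flower_t N j == v) F j = \sum_j F j.
Proof. by case: v; apply: eq_bigl => j. Qed.
Lemma sum_mo N (F : 'I_N -> CC) : \sum_(j | @mand_o N j == true) F j = 0.
Proof. by rewrite big_pred0. Qed.
Lemma sum_mt N (F : 'I_N -> CC) : \sum_(j | @mand_t N j == false) F j = 0.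
Proof. by rewrite big_pred0. Qed.
Lemma sum_mo' N (F : 'I_N -> CC) : \sum_(j | @mand_o N j == false) F j = \sum_j F j.
Proof. by apply: eq_bigl => j. Qed.
Lemma sum_mt' N (F : 'I_N -> CC) : \sum_(j | @mand_t N j == true) F j = \sum_j F j.
Proof. by apply: eq_bigl => j. Qed.

Lemma good_flower N (k : R) (l : 'I_N -> R) (x : 'I_N -> CC * CC * CC * CC) :
  good k l x -> eigcoeffs (@flower_o N) (@flower_t N) k l x.
Proof.
move=> [hs [hr [hA hB]]]; split; first exact: hr.
split.
  move=> i j; split; first by move=> _; exact: hA.
  split; first by move=> _; rewrite -!(proj1 (hs _)); exact: hA.
  by move=> _; rewrite -(proj1 (hs _)); exact: hA.
move=> v; rewrite !(@sum_fl _ v) ?(@sum_flt _ v).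
under [X in _ + X = _]eq_bigr do rewrite -(proj2 (hs _)).
by rewrite -!mulr_sumr hB mulr0 addr0.
Qed.

Lemma rCk_neq0 (k : R) : 0 < k -> rC k != 0.
Proof. by move=> hk; apply/eqP => /rC_eq0 h; rewrite h ltxx in hk. Qed.

Lemma flower_good N (k : R) (l : 'I_N -> R) (x : 'I_N -> CC * CC * CC * CC) :
  0 < k -> symcoeffs x -> eigcoeffs (@flower_o N) (@flower_t N) k l x -> good k l x.
Proof.
move=> hk hs [hr [hc hv]]; split; first exact: hs.
split; first exact: hr.
split; first by move=> i j; exact: (proj1 (hc i j)).
have := hv tt; rewrite !(@sum_fl _ tt) ?(@sum_flt _ tt).
under [X in _ + X = _]eq_bigr do rewrite -(proj2 (hs _)).
rewrite -!mulr_sumr -mulrDl => /eqP; rewrite mulf_eq0 => /orP [|/eqP //].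
rewrite -rCD => /eqP /rC_eq0 h; change (k + k = 0) in h.
have : 0 < k + k by rewrite addr_gt0.
by rewrite h ltxx.
Qed.

Lemma mand_good N (k : R) (l : 'I_N -> R) (x : 'I_N -> CC * CC * CC * CC) :
  0 < k -> symcoeffs x -> eigcoeffs (@mand_o N) (@mand_t N) k l x -> good k l x.
Proof.
move=> hk hs [hr [hc hv]]; split; first exact: hs.
split; first exact: hr.
split; first by move=> i j; exact: (proj1 (hc i j)).
have := hv false; rewrite sum_mo' sum_mt addr0 -mulr_sumr => /eqP.
rewrite mulf_eq0 (negbTE (rCk_neq0 _ hk)) => /eqP //.
Qed.

Lemma good_mand N (k : R) (l : 'I_N -> R) (x : 'I_N -> CC * CC * CC * CC) :
  good k l x -> eigcoeffs (@mand_o N) (@mand_t N) k l x.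
Proof.
move=> [hs [hr [hA hB]]]; split; first exact: hr.
split.
  move=> i j; split; first by move=> _; exact: hA.
  split; first by move=> _; rewrite -!(proj1 (hs _)); exact: hA.
  by [].
case.
  rewrite sum_mo sum_mt' add0r.
  under eq_bigr do rewrite -(proj2 (hs _)).
  by rewrite -mulr_sumr hB mulr0.
by rewrite sum_mo' sum_mt addr0 -mulr_sumr hB mulr0.
Qed.

Lemma prodX_neq0 N : \prod_(j < N) (1 - 'X_j : {mpoly CC[N]}) != 0.
Proof.
apply/eqP => h0; have := congr1 (meval (fun _ => (0 : CC))) h0.
rewrite rmorph_prod meval0 big1 => [|j _]; last by rewrite rmorphB rmorph1 /= mevalXU subr0.
by move/eqP; rewrite oner_eq0.
Qed.

Theorem mainTheorem14 (N : nat) (hN : (1 <= N)%N) :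
  (forall (z : 'I_N -> CC) (x : 'I_N -> CC * CC * CC * CC),
      in_Tsym_flower z x <-> in_Ts_mandarin z x)
  /\ (exists c : CC,
        P_flower N = (c *: P_Ms N) * \prod_(j < N) (1 - 'X_j)).
Proof.
have hP := Pflower_eq _ hN.
set c := (- N%:R^-1 : CC) in hP.
have hc : c != 0.
  by rewrite /c oppr_eq0 invr_eq0 pnatr_eq0 -lt0n.
have hQ : forall Q, P_flower N = Q * \prod_(j < N) (1 - 'X_j) -> Q = c *: P_Ms N.
  by move=> Q hQ; apply: (mulIf (prodX_neq0 N)); rewrite -hQ hP.
split; last by exists c.
move=> z x; split.
  move=> [hT [[Q [hQP hQz]] hs]].
  have hPz : (P_Ms N).@[z] = 0.
    move: hQz; rewrite (hQ Q hQP) mevalZ => /eqP; rewrite mulf_eq0 (negbTE hc) => /eqP //.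
  split; last by split.
  move: hT => [l [hl [k [hk [hz hcase]]]]]; exists l; split=> //; exists k; split=> //; split=> //.
  case: hcase => [h|[hk0 [_ he]]]; [by left | right].
  subst z; have [x' [hg hnz]] := witness _ hN k l hPz.
  split=> //; split; first by exists x'; split=> //; exact: good_mand.
  apply: good_mand; exact: (flower_good _ _ _ _ hk0 hs he).
move=> [hT [hPz hs]].
split.
  move: hT => [l [hl [k [hk [hz hcase]]]]]; exists l; split=> //; exists k; split=> //; split=> //.
  case: hcase => [h|[hk0 [_ he]]]; [by left | right].
  subst z; have [x' [hg hnz]] := witness _ hN k l hPz.
  split=> //; split; first by exists x'; split=> //; exact: good_flower.
  apply: good_flower; exact: (mand_good _ _ _ _ hk0 hs he).
split; last by [].
by exists (c *: P_Ms N); split=> //; rewrite mevalZ hPz mulr0.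
Qed.
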